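(* Let $a,b,c\in\mathbb{R}$ with $a+c=b$, and let $\rho=\max\{|a|,|b|,|c|\}$ satisfy $0<\rho<24/35$. Let $D_\rho=\det\begin{pmatrix}2+a&1+b\\1+b&2+c\end{pmatrix}$ and let $M_\rho=\min\{Q_\rho(s,t):(s,t)\in\mathbb{Z}^2\setminus\{(0,0)\}\}$, where $Q_\rho(s,t)=(2+a)s^2+2(1+b)st+(2+c)t^2$. Then $D_\rho^{-1/2}M_\rho<2\cdot 3^{-1/2}$. *)

(* Defs.v *)
From HB Require Import structures.
From mathcomp Require Import all_boot all_order all_algebra.
From mathcomp Require Import boolp classical_sets reals.
Set Implicit Arguments. Unset Strict Implicit. Unset Printing Implicit Defensive.
Import Order.TTheory GRing.Theory Num.Theory.
Local Open Scope ring_scope.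
Local Open Scope classical_set_scope.

Definition rho_of (R : realType) (a b c : R) : R :=
  Num.max `|a| (Num.max `|b| `|c|).

Definition Qrho (R : realType) (a b c : R) (s t : int) : R :=
  (2 + a) * (s%:~R) ^+ 2 + 2 * (1 + b) * s%:~R * t%:~R + (2 + c) * (t%:~R) ^+ 2.

Definition Drho (R : realType) (a b c : R) : R :=
  \det (\matrix_(i < 2, j < 2)
          (if (i == 0%N :> nat) && (j == 0%N :> nat) then 2 + a
           else if (i == 1%N :> nat) && (j == 1%N :> nat) then 2 + c
           else 1 + b)).

(* M_rho = min of Q_rho over Z^2 \ {(0,0)}, taken as the infimum
   (the minimum is attained since Q_rho is positive definite) *)
Definition Mrho (R : realType) (a b c : R) : R :=
  inf [set Qrho a b c p.1 p.2 | p in [set p : int * int | p != (0, 0)]].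

(* Main.v *)
Require Import Defs.
From HB Require Import structures.
From mathcomp Require Import all_boot all_order all_algebra.
From mathcomp Require Import boolp classical_sets reals.
From mathcomp Require Import ring lra.
Import Order.TTheory GRing.Theory Num.Theory.
Local Open Scope ring_scope.

Lemma Dval (R : realType) (a b c : R) : Drho a b c = (2+a)*(2+c) - (1+b)^+2.
Proof.
rewrite /Drho (expand_det_row _ 0) !big_ord_recl big_ord0 /cofactor !det_mx11 !mxE /=.
rewrite /bump /= expr0 expr1; ring.
Qed.

Lemma Qnonneg (R : realType) (a b c : R) s t :
  0 < 2 + a -> 0 < (2+a)*(2+c) - (1+b)^+2 -> 0 <= Qrho a b c s t.
Proof.
move=> h1 h2; rewrite /Qrho.
set x : R := s%:~R; set y : R := t%:~R.
have e : (2+a) * ((2 + a) * x ^+ 2 + 2 * (1 + b) * x * y + (2 + c) * y ^+ 2)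
   = ((2+a)*x + (1+b)*y)^+2 + ((2+a)*(2+c) - (1+b)^+2) * y^+2 by ring.
have : 0 <= (2+a) * ((2 + a) * x ^+ 2 + 2 * (1 + b) * x * y + (2 + c) * y ^+ 2).
  by rewrite e addr_ge0 // ?sqr_ge0 // mulr_ge0 // ?sqr_ge0 // ltW.
by rewrite pmulr_rge0.
Qed.

Lemma Mle (R : realType) (a b c : R) s t :
  0 < 2 + a -> 0 < (2+a)*(2+c) - (1+b)^+2 -> (s, t) != (0, 0) ->
  Mrho a b c <= Qrho a b c s t.
Proof.
move=> h1 h2 hst; rewrite /Mrho.
apply: ge_inf.
  exists 0 => _ [p _ <-]; exact: Qnonneg.
by exists (s, t).
Qed.

Theorem mainTheorem10 (R : realType) (a b c : R) :
  a + c = b ->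
  0 < rho_of a b c -> rho_of a b c < 24 / 35 ->
  (Num.sqrt (Drho a b c))^-1 * Mrho a b c < 2 * (Num.sqrt 3)^-1.
Proof.
move=> hb hr0 hr1.
have ha : `|a| <= rho_of a b c by rewrite /rho_of le_max lexx.
have hb' : `|b| <= rho_of a b c by rewrite /rho_of !le_max lexx orbT.
have hc : `|c| <= rho_of a b c by rewrite /rho_of !le_max lexx !orbT.
have hneq : a < 0 \/ c < 0 \/ 0 < b.
  case: (ltP a 0) => [|a0]; first by left.
  case: (ltP c 0) => [|c0]; first by right; left.
  case: (ltP 0 b) => [|b0]; first by right; right.
  have ea : a = 0 by lra.
  have ec : c = 0 by lra.
  have eb : b = 0 by lra.
  by move: hr0; rewrite /rho_of ea eb ec normr0 !maxxx ltxx.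
set r := rho_of a b c in hr0 hr1 ha hb' hc.
move: ha hb' hc => /ler_normlP [ha1 ha2] /ler_normlP [hb1 hb2] /ler_normlP [hc1 hc2].
rewrite Dval.
set D := (2+a)*(2+c) - (1+b)^+2.
have hD : 0 < D by rewrite /D; nra.
have h2a : 0 < 2 + a by lra.
have [v [hv0 [hv hM]]] : exists v, 0 < v /\ 3 * v^+2 < 4 * D /\ Mrho a b c <= v.
  case: (boolP ((a <= c) && (a <= - b))) => [/andP [hac hab]|].
    exists (2 + a); split; first lra.
    split.
      have h1 : 0 <= (c - a) * (- 2 * a - c) by apply: mulr_ge0; lra.
      have h2 : a * (4 + 5 * a) < 0 by nra.
      rewrite /D -hb; nra.
    have := @Mle R a b c 1 0 h2a hD isT; congr (_ <= _); rewrite /Qrho /= ?mulr1z ?mulr0z ?mulrN1z -?hb; ring.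
  rewrite negb_and -!ltNge => hn.
  case: (boolP ((c <= a) && (c <= - b))) => [/andP [hac hab]|].
    exists (2 + c); split; first lra.
    split.
      have h1 : 0 <= (a - c) * (- 2 * c - a) by apply: mulr_ge0; lra.
      have h2 : c * (4 + 5 * c) < 0 by nra.
      rewrite /D -hb; nra.
    have := @Mle R a b c 0 1 h2a hD isT; congr (_ <= _); rewrite /Qrho /= ?mulr1z ?mulr0z ?mulrN1z -?hb; ring.
  rewrite negb_and -!ltNge => hn'.
  exists (2 - b); split; first lra.
  split.
    have hmb : - b < 0 by lra.
    have h1 : 0 <= (a + b) * (c + b) by apply: mulr_ge0; lra.
    have h2 : - b * (4 - 5 * b) < 0 by nra.
    rewrite /D -hb; nra.
  have := @Mle R a b c 1 (-1) h2a hD isT; congr (_ <= _); rewrite /Qrho /= ?mulr1z ?mulr0z ?mulrN1z -?hb; ring.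
have hsD : 0 < Num.sqrt D by rewrite sqrtr_gt0.
have hs3 : 0 < Num.sqrt (3 : R) by rewrite sqrtr_gt0.
apply: (le_lt_trans (y := (Num.sqrt D)^-1 * v)).
  by apply: ler_wpM2l => //; rewrite invr_ge0 ltW.
rewrite ltr_pdivrMl // mulrA ltr_pdivlMr //.
have e1 : v * Num.sqrt 3 = Num.sqrt (v^+2 * 3) by rewrite sqrtrM ?sqr_ge0 // sqrtr_sqr gtr0_norm.
have e2 : Num.sqrt D * 2 = Num.sqrt (D * 2^+2) by rewrite sqrtrM ?ltW // sqrtr_sqr gtr0_norm.
rewrite e1 e2 ltr_sqrt; last by rewrite mulr_gt0 // exprn_gt0.
lra.
Qed.
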